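(* For $n\ge0$ let $A_n=\sum_{r=0}^n n!/r!$ (so $A_n/n!=\sum_{r=0}^n 1/r!$), let $d_n=\gcd(A_n,n!)$, let $N_n=A_n/d_n$ be the numerator of $\sum_{r=0}^n1/r!$ in lowest terms, and let $R_n=\gcd(N_n,N_{n+2})$. Let $$P^{\ast}=\{p \text{ prime} : 0!-1!+2!-3!+\cdots+(-1)^{p-1}(p-1)!\equiv 0 \pmod p\}.$$ Then the terms of the sequence $R_0,R_1,\dots$ are ones and all the primes of $P^\ast$. More precisely: $R_1=2$; for every odd $p\in P^{\ast}$, $R_{p-3}=p$; and $R_n=1$ for all other $n\ge 0$. *)

(* Defs.v *)
From mathcomp Require Import all_boot all_order all_algebra.
Set Implicit Arguments. Unset Strict Implicit. Unset Printing Implicit Defensive.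
Import GRing.Theory Num.Theory.

(* A_n = sum_{r=0}^n n!/r!  (each n!/r! is an exact integer for r <= n) *)
Definition A (n : nat) : nat := \sum_(r < n.+1) n`! %/ r`!.
Definition d (n : nat) : nat := gcdn (A n) n`!.
(* N_n = A_n / d_n : numerator of sum_{r<=n} 1/r! in lowest terms *)
Definition N (n : nat) : nat := A n %/ d n.
Definition R (n : nat) : nat := gcdn (N n) (N n.+2).

Definition altfact (p : nat) : int :=
  (\sum_(k < p) (-1) ^+ k * (k`!)%:Z)%R.

Definition inPstar (p : nat) : Prop := prime p /\ (p%:Z %| altfact p)%Z.

(* Main.v *)
Require Import Defs.
From mathcomp Require Import all_boot all_order all_algebra.
From mathcomp Require Import ring zify.
Import GRing.Theory Num.Theory.
Local Notation "n %:Z" := (Posz n) (only parsing) : nat_scope.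

Lemma fact_dvd {m n} : m <= n -> m`! %| n`!.
Proof. by move=> /fact_split ->; apply: dvdn_mulr. Qed.

Lemma AS n : A n.+1 = n.+1 * A n + 1.
Proof.
rewrite /A big_ord_recr /= divnn fact_gt0 big_distrr /=; congr (_ + _).
apply: eq_bigr => i _; rewrite factS muln_divA //; apply: fact_dvd.
by rewrite -ltnS ltn_ord.
Qed.

Lemma A_pos n : 0 < A n.
Proof. by case: n => [|n]; [rewrite /A big_ord1 | rewrite AS addn1]. Qed.

Lemma ASS n : A n.+2 = n.+2 * n.+1 * A n + n.+3.
Proof. rewrite !AS; ring. Qed.

Lemma dvd2 a b m : 0 < a -> a < b -> b <= m -> a * b %| m`!.
Proof.
move=> a0 ab bm; apply: (@dvdn_trans _ _ _ _ (fact_dvd bm)).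
case: b ab bm => // b ab _; rewrite factS (mulnC a) dvdn_mul //.
by rewrite dvdn_fact // a0 -ltnS.
Qed.

Lemma composite k : 1 < k -> ~~ prime k -> k != 4 -> k %| k.-1`!.
Proof.
move=> k1 kp k4.
have pa := pdiv_prime k1; have a1 := prime_gt1 pa.
have ak : pdiv k %| k := pdiv_dvd k.
set a := pdiv k in pa a1 ak.
have kE : k = k %/ a * a by rewrite divnK.
set b := k %/ a in kE.
have ak' : a < k.
  have := dvdn_leq (ltnW k1) ak.
  rewrite leq_eqVlt => /orP[/eqP E|//].
  by move: kp; rewrite -E pa.
have b1 : 1 < b.
  case: b kE => [|[|b]] // kE; first by lia.
  by move: kp; rewrite kE mul1n pa.
case: (ltngtP a b) => [ab|ba|ab].
- rewrite {1}kE (mulnC b a); apply: dvd2; nia.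
- rewrite {1}kE; apply: dvd2; nia.
- rewrite -ab in kE.
  have a3 : 2 < a.
    rewrite ltnNge; apply/negP => a2.
    have ea : a = 2 by lia.
    by move: k4; rewrite kE ea.
  have H : a * (2 * a) %| k.-1`! by apply: dvd2; nia.
  apply: (@dvdn_trans _ _ _ _ H); by rewrite {1}kE dvdn_mul // dvdn_mull.
Qed.

Definition M n := n`! %/ d n.

Lemma d_pos n : 0 < d n. Proof. by rewrite /d gcdn_gt0 A_pos. Qed.
Lemma NE n : N n * d n = A n. Proof. by rewrite /N divnK // /d dvdn_gcdl. Qed.
Lemma ME n : M n * d n = n`!. Proof. by rewrite /M divnK // /d dvdn_gcdr. Qed.

Lemma NM_coprime n : coprime (N n) (M n).
Proof.
have H : gcdn (N n) (M n) * d n = 1 * d n by rewrite muln_gcdl NE ME mul1n.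
by rewrite /coprime -(@eqn_pmul2r _ _ _ (d_pos n)) H.
Qed.

Lemma key n : N n.+2 * M n * n.+2`! = N n * M n.+2 * n.+2`! + n.+3 * M n * M n.+2.
Proof.
have dd : 0 < d n * d n.+2 by rewrite muln_gt0 !d_pos.
apply/eqP; rewrite -(@eqn_pmul2r _ _ _ dd); apply/eqP.
have E2 : M n.+2 * d n.+2 = n.+2 * n.+1 * (M n * d n) by rewrite !ME !factS mulnA.
have A2 : N n.+2 * d n.+2 = n.+2 * n.+1 * (N n * d n) + n.+3 by rewrite !NE ASS.
rewrite -(ME n.+2).
have L : forall a b c e f : nat, a * b * (c * e) * (f * e) = (a * e) * (b * f) * (c * e) by move=> *; ring.
have Rr : forall a b c e f m : nat, (a * b * (b * c) + m * e * b) * (f * c)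
   = (a * f) * (b * c) * (b * c) + m * (e * f) * (b * c) by move=> *; ring.
rewrite (L (N n.+2) (M n) (M n.+2) (d n.+2) (d n)) (Rr (N n) (M n.+2) (d n.+2) (M n) (d n) n.+3) A2 E2; ring.
Qed.

Lemma R1_comp n : n.+3 %| n.+2`! -> R n = 1.
Proof.
case/dvdnP=> t ht.
have K := key n; rewrite ht in K.
have K' : N n.+2 * M n * t = N n * M n.+2 * t + M n * M n.+2.
  apply/eqP; rewrite -(@eqn_pmul2r _ _ _ (ltn0Sn n.+2)); apply/eqP.
  transitivity (N n.+2 * M n * (t * n.+3)); first ring.
  rewrite K; ring.
have x0 : R n %| N n := dvdn_gcdl _ _.
have x2 : R n %| N n.+2 := dvdn_gcdr _ _.
have H : R n %| M n * M n.+2.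
  have h1 : R n %| N n.+2 * M n * t by rewrite -mulnA dvdn_mulr.
  rewrite K' dvdn_addr in h1 => //.
  by rewrite -mulnA dvdn_mulr.
have cop : coprime (R n) (M n * M n.+2).
  by rewrite coprimeMr (coprime_dvdl x0 (NM_coprime n)) (coprime_dvdl x2 (NM_coprime _)).
by move: cop; rewrite /coprime (gcdn_idPl H) => /eqP.
Qed.

Lemma R_dvd n : R n %| n.+3.
Proof.
have hA : R n %| A n by rewrite -NE dvdn_mulr // dvdn_gcdl.
have hA2 : R n %| A n.+2 by rewrite -NE dvdn_mulr // dvdn_gcdr.
by move: hA2; rewrite ASS dvdn_addr // dvdn_mull.
Qed.

Lemma prime_fact_coprime p m : prime p -> m < p -> coprime p m`!.
Proof.
move=> pp; elim: m => [|m IH] lt; first by rewrite coprimen1.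
rewrite factS coprimeMr (IH (ltnW lt)) andbT prime_coprime //.
apply/negP => /(dvdn_leq (ltn0Sn m)); lia.
Qed.

Lemma gen m : forall j i, i + j = m -> exists c : int,
  (A m)%:Z = (altfact j + (-1) ^+ j * (j`!)%:Z * (A i)%:Z + c * (m.+1)%:Z)%R.
Proof.
elim=> [|j IH] i Hij.
  exists 0%R; rewrite addn0 in Hij; by rewrite Hij /altfact big_ord0 expr0 fact0 !mul1r mul0r addr0 add0r.
have [c Hc] := IH i.+1 ltac:(lia).
exists (c + (-1) ^+ j * (j`!)%:Z * (A i)%:Z)%R.
have HA : (A i.+1)%:Z = ((i.+1)%:Z * (A i)%:Z + 1)%R by rewrite AS PoszD PoszM.
have Hm : (m.+1)%:Z = ((i.+1)%:Z + (j.+1)%:Z)%R by rewrite -PoszD; congr Posz; lia.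
rewrite Hc HA Hm /altfact big_ord_recr /= factS PoszM exprS; ring.
Qed.

Lemma altA n : odd n.+3 -> ((n.+3)%:Z %| altfact n.+3)%Z = (n.+3 %| A n).
Proof.
move=> od.
have [c Hc] := gen n.+2 n.+2 0 (add0n _).
have A0 : A 0 = 1 by rewrite /A big_ord1.
rewrite A0 in Hc.
have HS : altfact n.+3 = (altfact n.+2 + (-1) ^+ n.+2 * (n.+2`!)%:Z)%R.
  by rewrite /altfact big_ord_recr.
have s1 : forall k, (k.+1)%:Z = (k%:Z + 1)%R by move=> k; rewrite -addn1 PoszD.
have k2 : altfact n.+3 = ((2 * A n)%:Z + (n.+3)%:Z * ((n * A n)%:Z + 1 - c))%R.
  have e : (A n.+2)%:Z = (altfact n.+3 + c * (n.+3)%:Z)%R by rewrite Hc HS; ring.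
  have e2 : (A n.+2)%:Z = ((n%:Z + 2) * (n%:Z + 1) * (A n)%:Z + (n%:Z + 3))%R.
    by rewrite ASS PoszD !PoszM !s1; ring.
  have e3 : (n.+3)%:Z = (n%:Z + 3)%R by rewrite !s1; ring.
  rewrite e3 !PoszM.
  have : altfact n.+3 = ((A n.+2)%:Z - c * (n.+3)%:Z)%R by rewrite e; ring.
  move=> ->; rewrite e2 e3; ring.
rewrite k2 rpredDr; last by apply: dvdz_mulr; rewrite dvdzz.
by rewrite dvdzE /= Gauss_dvdr // coprimen2.
Qed.

Theorem theorem5p1 :
  R 1 = 2 /\
  (forall p : nat, inPstar p -> odd p -> R (p - 3) = p) /\
  (forall n : nat, n <> 1 ->
     (forall p : nat, inPstar p -> odd p -> n <> p - 3) -> R n = 1).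
Proof.
have A0 : A 0 = 1 by rewrite /A big_ord1.
split; first by rewrite /R /N /d !AS A0.
split.
  move=> p [pp pa] op.
  have p2 : 2 < p by case: (even_prime pp) op => [->|] //; have := prime_gt1 pp; lia.
  have [n En] : exists n, p = n.+3 by exists (p - 3); lia.
  subst p; have -> : n.+3 - 3 = n by lia.
  have hA : n.+3 %| A n by rewrite -altA.
  have hA2 : n.+3 %| A n.+2 by rewrite ASS dvdn_add // dvdn_mull.
  have cop0 : coprime n.+3 (d n).
    apply: (@coprime_dvdr _ _ _ (dvdn_gcdr _ _)); apply: prime_fact_coprime pp _; lia.
  have cop2 : coprime n.+3 (d n.+2).
    apply: (@coprime_dvdr _ _ _ (dvdn_gcdr _ _)); apply: prime_fact_coprime pp _; lia.
  have hN : n.+3 %| N n by rewrite -(Gauss_dvdl (N n) cop0) NE.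
  have hN2 : n.+3 %| N n.+2 by rewrite -(Gauss_dvdl (N n.+2) cop2) NE.
  have h1 : n.+3 %| R n by rewrite dvdn_gcd hN hN2.
  by apply/eqP; rewrite eqn_dvd h1 R_dvd.
move=> n n1 hyp.
case pn: (prime n.+3).
  have od : odd n.+3 by case: (even_prime pn) => //; lia.
  have := R_dvd n; case/primeP: pn => _ H /H /orP[/eqP //|/eqP E].
  exfalso; apply: (hyp n.+3 _ od); last by lia.
  split; first by apply/primeP.
  by rewrite altA // -E -NE dvdn_mulr // /R dvdn_gcdl.
apply: R1_comp; apply: (@composite n.+3) => //; first by rewrite pn.
lia.
Qed.
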